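(* Let $F$ be a finite-dimensional Freudenthal triple system over $\Bbbk\in\{\mathbb{R},\mathbb{C}\}$ with antisymmetric bilinear form $\langle\cdot,\cdot\rangle$. For $a,b\in F$ define polynomial maps $F\oplus\Bbbk\to F\oplus\Bbbk$ by (for $z\in F$, $\zeta\in\Bbbk$; scalar-valued terms lie in the $\Bbbk$ component): $K_{ab}(z+\zeta)=2\langle a,b\rangle$, $U_a(z+\zeta)=a+\langle a,z\rangle$, $S_{ab}(z+\zeta)=(abz)-\zeta\langle a,b\rangle$, $\tilde U_a(z+\zeta)=-\tfrac12(zaz)-\tfrac12\zeta a+\tfrac16\langle (zzz),a\rangle-\tfrac12\zeta\langle a,z\rangle$, $\tilde K_{ab}(z+\zeta)=\tfrac16\langle a,b\rangle(zzz)+\tfrac12\zeta\langle a,b\rangle z-\tfrac1{12}\langle a,b\rangle\langle (zzz),z\rangle+\tfrac12\zeta^2\langle a,b\rangle$. Then their linear span is a Lie algebra under $[f,g](p)=Df(p)(g(p))-Dg(p)(f(p))$, and for all $a,b,c,d\in F$: $[S_{ab},S_{cd}]=S_{(abc)d}+S_{c(bad)}$, $[S_{ab},U_c]=U_{(abc)}$, $[S_{ab},K_{cd}]=\langle c,d\rangle K_{ba}$, $[U_a,U_b]=K_{ab}$, $[S_{ab},\tilde U_c]=\tilde U_{(bac)}$, $[S_{ab},\tilde K_{cd}]=\langle c,d\rangle\tilde K_{ab}$, $[U_a,\tilde U_b]=S_{ab}$, $[U_a,\tilde K_{cd}]=\langle c,d\rangle\tilde U_a$, $[K_{ab},\tilde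 U_c]=\langle a,b\rangle U_c$, $[K_{ab},\tilde K_{cd}]=\langle a,b\rangle(S_{cd}-S_{dc})$, $[\tilde U_a,\tilde U_b]=\tilde K_{ab}$, $[\tilde K_{ab},\tilde K_{cd}]=[\tilde K_{ab},\tilde U_c]=0$.
   Context: A Freudenthal triple system (FTS) is a vector space $F$ over $\Bbbk$ with a trilinear product $(xyz)$ and an antisymmetric bilinear form $\langle\cdot,\cdot\rangle:F\times F\to\Bbbk$ such that for all $u,v,x,y,z\in F$: $(uv(xyz))=((uvx)yz)+(x(vuy)z)+(xy(uvz))$; $\langle x,y\rangle z=(xzy)-(yzx)=(yxz)-(xyz)$; $\langle u,v\rangle\langle x,y\rangle=\langle (yxu),v\rangle-\langle (yxv),u\rangle$. $Df(p)$ is the derivative of the polynomial map $f$ at $p$. *)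

(* Defs.v *)
From HB Require Import structures.
From mathcomp Require Import all_boot all_order all_algebra.
From Stdlib Require Import ClassicalEpsilon.
Set Implicit Arguments. Unset Strict Implicit. Unset Printing Implicit Defensive.
Import Order.TTheory GRing.Theory Num.Theory.
Local Open Scope ring_scope.

Definition is_FTS (k : numFieldType) (F : vectType k)
    (t : F -> F -> F -> F) (w : F -> F -> k) : Prop :=
  (forall (a : k) (x y u v : F), t (a *: x + y) u v = a *: t x u v + t y u v) /\
  (forall (a : k) (x y u v : F), t u (a *: x + y) v = a *: t u x v + t u y v) /\
  (forall (a : k) (x y u v : F), t u v (a *: x + y) = a *: t u v x + t u v y) /\
  (forall (a : k) (x y u : F), w (a *: x + y) u = a * w x u + w y u) /\
  (forall (a : k) (x y u : F), w u (a *: x + y) = a * w u x + w u y) /\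
  (forall x y : F, w x y = - w y x) /\
  (forall u v x y z : F,
      t u v (t x y z) = t (t u v x) y z + t x (t v u y) z + t x y (t u v z)) /\
  (forall x y z : F, w x y *: z = t x z y - t y z x) /\
  (forall x y z : F, w x y *: z = t y x z - t x y z) /\
  (forall u v x y : F, w u v * w x y = w (t y x u) v - w (t y x v) u).

Section PolyMaps.
Variables (k : numFieldType) (F : vectType k).
Variables (t : F -> F -> F -> F) (w : F -> F -> k).

(* The space F (+) k, the second component being k viewed as a k-module. *)
Definition V := (F * k^o)%type.

(* w is the derivative of f at p in direction v: f(p + s v) is a polynomial
   in s whose constant term is f(p) and whose linear coefficient is w. *)
Definition is_dir_deriv (f : V -> V) (p v dv : V) : Prop :=
  exists (n : nat) (c : nat -> V), forall s : k,
    f (p + s *: v) = f p + s *: dv + \sum_(i < n) s ^+ i.+2 *: c i.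

Definition Dmap (f : V -> V) (p v : V) : V :=
  epsilon (inhabits (0 : V)) (is_dir_deriv f p v).

Definition bracket (f g : V -> V) : V -> V :=
  fun p => Dmap f p (g p) - Dmap g p (f p).

Definition mkV (z : F) (x : k) : V := (z, x : k^o).

Definition Kmap (a b : F) : V -> V := fun _ => mkV 0 (2 * w a b).
Definition Umap (a : F) : V -> V := fun p => mkV a (w a p.1).
Definition Smap (a b : F) : V -> V :=
  fun p => mkV (t a b p.1) (- (p.2 : k) * w a b).
Definition Utmap (a : F) : V -> V := fun p =>
  let z := p.1 in let ze : k := p.2 in
  mkV (- (1/2) *: t z a z - (1/2 * ze) *: a)
      (1/6 * w (t z z z) a - 1/2 * ze * w a z).
Definition Ktmap (a b : F) : V -> V := fun p =>
  let z := p.1 in let ze : k := p.2 in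
  mkV ((1/6 * w a b) *: t z z z + (1/2 * ze * w a b) *: z)
      (- (1/12) * w a b * w (t z z z) z + 1/2 * ze ^+ 2 * w a b).

Definition generator (f : V -> V) : Prop :=
  (exists a b, f = Kmap a b) \/ (exists a, f = Umap a) \/
  (exists a b, f = Smap a b) \/ (exists a, f = Utmap a) \/
  (exists a b, f = Ktmap a b).

Inductive inspan : (V -> V) -> Prop :=
  | span0 : inspan (fun _ => 0)
  | spanG f : generator f -> inspan f
  | spanLC (a : k) f g : inspan f -> inspan g -> inspan (fun p => a *: f p + g p).

End PolyMaps.

(* Main.v *)
Require Import Defs.
From HB Require Import structures.
From mathcomp Require Import all_boot all_order all_algebra.
From mathcomp Require Import ring.
From Stdlib Require Import ClassicalEpsilon FunctionalExtensionality.
Set Implicit Arguments. Unset Strict Implicit. Unset Printing Implicit Defensive.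
Import Order.TTheory GRing.Theory Num.Theory.
Local Open Scope ring_scope.

Section Calc.
Variable k : numFieldType.

Inductive PL (X : lmodType k) : (k -> X) -> Prop :=
| PLc (x : X) : PL (fun _ => x)
| PLs (x : X) (r : k -> X) : PL r -> PL (fun s => x + s *: r s).

Definition lin (X Y : lmodType k) (L : X -> Y) :=
  forall a x y, L (a *: x + y) = a *: L x + L y.

Section LinL.
Variables (X Y : lmodType k) (L : X -> Y) (HL : lin L).
Lemma lin0 : L 0 = 0.
Proof. have := HL 1 0 0; rewrite !scale1r !addr0 => E. by apply: (addrI (L 0)); rewrite addr0 -E. Qed.
Lemma linD x y : L (x + y) = L x + L y.
Proof. by have := HL 1 x y; rewrite !scale1r. Qed.
Lemma linZ a x : L (a *: x) = a *: L x.
Proof. by rewrite -[a *: x]addr0 HL lin0 addr0. Qed.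
Lemma linN x : L (- x) = - L x.
Proof. by rewrite -scaleN1r linZ scaleN1r. Qed.
Lemma linB x y : L (x - y) = L x - L y.
Proof. by rewrite linD linN. Qed.
Lemma linS I r (P : pred I) (G : I -> X) :
  L (\sum_(i <- r | P i) G i) = \sum_(i <- r | P i) L (G i).
Proof.
elim/big_rec2: _ => [|i y1 y2 _ <-]; first exact: lin0.
exact: linD.
Qed.
End LinL.

Lemma PL_ext (X : lmodType k) (f g : k -> X) : PL f -> (forall s, f s = g s) -> PL g.
Proof. by move=> H E; have -> : g = f by apply: functional_extensionality => s; rewrite E. Qed.

Lemma PL_add (X : lmodType k) (f g : k -> X) : PL f -> PL g -> PL (fun s => f s + g s).
Proof.
move=> Hf; elim: Hf g => [x|x r Hr IH] g Hg.
- case: Hg => [y|y r' Hr'].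
  + exact: PLc.
  + by apply: (PL_ext (PLs (x + y) Hr')) => s; rewrite addrA.
- case: Hg => [y|y r' Hr'].
  + by apply: (PL_ext (PLs (x + y) Hr)) => s; rewrite addrAC.
  + apply: (PL_ext (PLs (x + y) (IH _ Hr'))) => s.
    by rewrite scalerDr addrACA.
Qed.

Lemma PL_lin (X Y : lmodType k) (L : X -> Y) (f : k -> X) :
  lin L -> PL f -> PL (fun s => L (f s)).
Proof.
move=> HL; elim=> [x|x r Hr IH]; first exact: PLc.
by apply: (PL_ext (PLs (L x) IH)) => s; rewrite (linD HL) (linZ HL).
Qed.

Lemma PL_mulX (X : lmodType k) (f : k -> X) : PL f -> PL (fun s => s *: f s).
Proof. by move=> H; apply: (PL_ext (PLs 0 H)) => s; rewrite add0r. Qed.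

Lemma PL_cst (X : lmodType k) (x : X) : PL (fun _ => x).
Proof. exact: PLc. Qed.

Lemma PL_opp (X : lmodType k) (f : k -> X) : PL f -> PL (fun s => - f s).
Proof. by move=> H; apply: (PL_ext (PL_lin (L := fun x : X => - x) _ H)) => // a x y; rewrite opprD scalerN. Qed.

Definition bil (X Y Z : lmodType k) (B : X -> Y -> Z) :=
  (forall y, lin (fun x => B x y)) /\ (forall x, lin (B x)).

Lemma PL_bil (X Y Z : lmodType k) (B : X -> Y -> Z) f g :
  bil B -> PL f -> PL g -> PL (fun s => B (f s) (g s)).
Proof.
move=> [H1 H2] Hf; elim: Hf g => [x|x r Hr IH] g Hg.
- exact: (PL_lin (H2 x) Hg).
- apply: (PL_ext (PL_add (PL_lin (H2 x) Hg) (PL_mulX (IH _ Hg)))) => s.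
  by rewrite (linD (H1 _)) (linZ (H1 _)).
Qed.

Definition tril (X Y Z W : lmodType k) (T : X -> Y -> Z -> W) :=
  (forall y z, lin (fun x => T x y z)) /\ (forall x z, lin (fun y => T x y z)) /\
  (forall x y, lin (T x y)).

Lemma PL_tril (X Y Z W : lmodType k) (T : X -> Y -> Z -> W) f g h :
  tril T -> PL f -> PL g -> PL h -> PL (fun s => T (f s) (g s) (h s)).
Proof.
move=> [H1 [H2 H3]] Hf.
have Hb : forall x, bil (T x) by move=> x; split=> [z|y]; [exact: H2|exact: H3].
elim: Hf g h => [x|x r Hr IH] g h Hg Hh.
- exact: (PL_bil (Hb x) Hg Hh).
- apply: (PL_ext (PL_add (PL_bil (Hb x) Hg Hh) (PL_mulX (IH _ _ Hg Hh)))) => s.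
  by rewrite (linD (H1 _ _)) (linZ (H1 _ _)).
Qed.

Definition T1 (X : lmodType k) (f : k -> X) (x0 x1 : X) :=
  exists r, PL r /\ r 0 = x1 /\ forall s, f s = x0 + s *: r s.

Lemma PL_T1 (X : lmodType k) (f : k -> X) x0 x1 : T1 f x0 x1 -> PL f.
Proof. by case=> r [Hr [_ E]]; apply: (PL_ext (PLs x0 Hr)) => s; rewrite E. Qed.

Lemma T1_conv (X : lmodType k) (f : k -> X) y0 y1 x0 x1 :
  T1 f y0 y1 -> y0 = x0 -> y1 = x1 -> T1 f x0 x1.
Proof. by move=> H <- <-. Qed.

Lemma T1_ext (X : lmodType k) (f g : k -> X) x0 x1 :
  T1 f x0 x1 -> (forall s, f s = g s) -> T1 g x0 x1.
Proof. by case=> r [? [? E]] E'; exists r; split=> //; split=> // s; rewrite -E'. Qed.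

Lemma T1_cst (X : lmodType k) (x : X) : T1 (fun _ => x) x 0.
Proof. by exists (fun _ => 0); split; [exact: PLc|split=> // s; rewrite scaler0 addr0]. Qed.

Lemma T1_line (X : lmodType k) (x v : X) : T1 (fun s => x + s *: v) x v.
Proof. by exists (fun _ => v); split; [exact: PLc|]. Qed.

Lemma T1_add (X : lmodType k) (f g : k -> X) x0 x1 y0 y1 :
  T1 f x0 x1 -> T1 g y0 y1 -> T1 (fun s => f s + g s) (x0 + y0) (x1 + y1).
Proof.
case=> r [Hr [r0 E]] [r' [Hr' [r0' E']]].
exists (fun s => r s + r' s); split; first exact: PL_add.
by split=> [|s]; [rewrite r0 r0'|rewrite E E' scalerDr addrACA].
Qed.

Lemma T1_lin (X Y : lmodType k) (L : X -> Y) (f : k -> X) x0 x1 :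
  lin L -> T1 f x0 x1 -> T1 (fun s => L (f s)) (L x0) (L x1).
Proof.
move=> HL [r [Hr [r0 E]]]; exists (fun s => L (r s)); split; first exact: PL_lin.
by split=> [|s]; [rewrite r0|rewrite E (linD HL) (linZ HL)].
Qed.

Lemma T1_opp (X : lmodType k) (f : k -> X) x0 x1 :
  T1 f x0 x1 -> T1 (fun s => - f s) (- x0) (- x1).
Proof. by apply: (T1_lin (L := fun x : X => - x)) => a x y; rewrite opprD scalerN. Qed.

Lemma T1_sub (X : lmodType k) (f g : k -> X) x0 x1 y0 y1 :
  T1 f x0 x1 -> T1 g y0 y1 -> T1 (fun s => f s - g s) (x0 - y0) (x1 - y1).
Proof. by move=> H1 H2; apply: T1_add => //; apply: T1_opp. Qed.

Lemma T1_bil (X Y Z : lmodType k) (B : X -> Y -> Z) f g x0 x1 y0 y1 :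
  bil B -> T1 f x0 x1 -> T1 g y0 y1 ->
  T1 (fun s => B (f s) (g s)) (B x0 y0) (B x1 y0 + B x0 y1).
Proof.
move=> [H1 H2] [r [Hr [r0 E]]] [r' [Hr' [r0' E']]].
exists (fun s => B (r s) y0 + B x0 (r' s) + s *: B (r s) (r' s)); split.
  exact: (PL_add (PL_add (PL_lin (H1 y0) Hr) (PL_lin (H2 x0) Hr'))
                 (PL_mulX (PL_bil (conj H1 H2) Hr Hr'))).
split=> [|s]; first by rewrite scale0r addr0 r0 r0'.
rewrite E E' (linD (H2 _)) (linZ (H2 _)) !(linD (H1 _)) !(linZ (H1 _)).
by rewrite !scalerDr !scalerA -!addrA.
Qed.

Lemma T1_tril (X Y Z W : lmodType k) (T : X -> Y -> Z -> W) f g h x0 x1 y0 y1 z0 z1 :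
  tril T -> T1 f x0 x1 -> T1 g y0 y1 -> T1 h z0 z1 ->
  T1 (fun s => T (f s) (g s) (h s)) (T x0 y0 z0)
     (T x1 y0 z0 + T x0 y1 z0 + T x0 y0 z1).
Proof.
move=> [H1 [H2 H3]] Hf Hg Hh.
have Hb : forall x, bil (T x) by move=> x; split=> [z|y]; [exact: H2|exact: H3].
case: Hf => r [Hr [r0 E]].
have Hgh := T1_bil (Hb x0) Hg Hh.
have PLgh := PL_tril (conj H1 (conj H2 H3)) Hr (PL_T1 Hg) (PL_T1 Hh).
case: Hgh => q [Hq [q0 Eq]].
exists (fun s => q s + T (r s) (g s) (h s)); split; first by apply: PL_add.
split=> [|s].
  case: Hg Hh => rg [_ [_ Eg]] [rh [_ [_ Eh]]].
  by rewrite q0 r0 Eg Eh !scale0r !addr0 addrC addrA.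
by rewrite E (linD (H1 _ _)) (linZ (H1 _ _)) Eq scalerDr addrA.
Qed.

Lemma T1_pair (X Y : lmodType k) (f : k -> X) (g : k -> Y) x0 x1 y0 y1 :
  T1 f x0 x1 -> T1 g y0 y1 -> T1 (fun s => (f s, g s)) (x0, y0) (x1, y1).
Proof.
move=> Hf Hg.
have E : forall s, (f s, 0) + (0, g s) = (f s, g s) by move=> s; apply/eqP; rewrite xpair_eqE /= addr0 add0r !eqxx.
apply: (T1_ext _ E).
have -> : (x0, y0) = (x0, 0) + (0, y0) by apply/eqP; rewrite xpair_eqE /= addr0 add0r !eqxx.
have -> : (x1, y1) = (x1, 0) + (0, y1) by apply/eqP; rewrite xpair_eqE /= addr0 add0r !eqxx.
apply: T1_add.
- apply: (T1_lin (L := fun x : X => (x, 0 : Y))) => // a x y /=.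
  by apply/eqP; rewrite xpair_eqE /= scaler0 addr0 !eqxx.
- apply: (T1_lin (L := fun y : Y => (0 : X, y))) => // a x y /=.
  by apply/eqP; rewrite xpair_eqE /= scaler0 addr0 !eqxx.
Qed.

Lemma PL_poly (r : k -> k^o) : PL r -> exists P : {poly k}, forall s, r s = P.[s].
Proof.
elim=> [x|x r' _ [P HP]]; first by exists x%:P => s; rewrite hornerC.
by exists (x%:P + 'X * P) => s; rewrite hornerD hornerC hornerM hornerX -HP.
Qed.

Lemma poly_vanish (P : {poly k}) : (forall s, s != 0 -> P.[s] = 0) -> P.[0] = 0.
Proof.
move=> H; suff -> : P = 0 by rewrite horner0.
case: (eqVneq P 0) => // nz; exfalso.
set rs := [seq (i.+1)%:R | i <- iota 0 (size P)] : seq k.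
have Ha : all (root P) rs.
  apply/allP => x /mapP [i _ ->]; apply/rootP/H.
  by rewrite pnatr_eq0.
have Hu : uniq rs.
  rewrite map_inj_uniq ?iota_uniq // => i j /eqP.
  by rewrite eqr_nat => /eqP [].
have := max_poly_roots nz Ha Hu.
by rewrite size_map size_iota ltnn.
Qed.

Lemma PL_vanish (r : k -> k^o) : PL r -> (forall s, s != 0 -> r s = 0) -> r 0 = 0.
Proof.
move=> /PL_poly [P HP] H; rewrite HP; apply: poly_vanish => s /H.
by rewrite HP.
Qed.

Lemma PL_inv (X : lmodType k) (r : k -> X) : PL r ->
  exists r', PL r' /\ forall s, r s = r 0 + s *: r' s.
Proof.
case=> [x|x r' H].
- by exists (fun _ => 0); split; [exact: PLc|move=> s; rewrite scaler0 addr0].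
- by exists r'; split=> // s; rewrite scale0r addr0.
Qed.

Lemma PL_sumform (X : lmodType k) (r : k -> X) : PL r ->
  exists n (c : nat -> X), forall s, r s = \sum_(i < n) s ^+ i *: c i.
Proof.
elim=> [x|x r' _ [n [c Hc]]].
- by exists 1%N, (fun _ => x) => s; rewrite big_ord1 expr0 scale1r.
- exists n.+1, (fun i => if i is j.+1 then c j else x) => s.
  rewrite big_ord_recl expr0 scale1r Hc scaler_sumr; congr (_ + _).
  by apply: eq_bigr => i _; rewrite exprS scalerA.
Qed.

Lemma PL_pow (X : lmodType k) (x : X) m : PL (fun s => s ^+ m *: x).
Proof.
elim: m => [|m IH]; first by apply: (PL_ext (PLc x)) => s; rewrite expr0 scale1r.
by apply: (PL_ext (PL_mulX IH)) => s; rewrite scalerA exprS.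
Qed.

Lemma PL_sum (X : lmodType k) n (F : 'I_n -> k -> X) :
  (forall i, PL (F i)) -> PL (fun s => \sum_(i < n) F i s).
Proof.
move=> H; elim: n F H => [|n IH] F H.
  by apply: (PL_ext (PLc 0)) => s; rewrite big_ord0.
apply: (PL_ext (PL_add (IH (fun i => F (widen_ord (leqnSn n) i)) _) (H ord_max))) => [i|s] //.
by rewrite big_ord_recr.
Qed.

End Calc.


Section VSec.
Variables (k : numFieldType) (F : vectType k).

Lemma sepF (x : F) : (forall phi : F -> k^o, lin phi -> phi x = 0) -> x = 0.
Proof.
move=> H; rewrite (coord_vbasis (memvf x)); apply: big1 => i _.
rewrite H ?scale0r // => a u v; by rewrite linearP.
Qed.

Lemma sepV (x : V F) : (forall phi : V F -> k^o, lin phi -> phi x = 0) -> x = 0.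
Proof.
move=> H; case: x H => x1 x2 H.
have -> : x1 = 0.
  apply: sepF => phi Hphi; apply: (H (fun p => phi p.1)) => a u v /=.
  exact: Hphi.
have -> // : x2 = 0.
by apply: (H (fun p => p.2)) => a u v.
Qed.

Definition LD (f : V F -> V F) p v d := T1 (fun s => f (p + s *: v)) (f p) d.

Lemma LD_dd f p v d : LD f p v d -> is_dir_deriv f p v d.
Proof.
case=> r [Hr [r0 E]].
have [r' [Hr' Er']] := PL_inv Hr.
have [n [c Hc]] := PL_sumform Hr'.
exists n, c => s; rewrite E Er' r0 Hc scalerDr addrA; congr (_ + _).
rewrite !scaler_sumr; apply: eq_bigr => i _.
by rewrite !scalerA !exprS mulrA.
Qed.

Lemma dd_uniq f p v d d' : is_dir_deriv f p v d' -> LD f p v d -> d' = d.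
Proof.
move=> [n [c H]] [r [Hr [r0 E]]].
pose g s := d' + (\sum_(i < n) s ^+ i.+1 *: c i) - r s.
have Pg : PL g.
  apply: PL_add; last exact: PL_opp.
  apply: PL_add; first exact: PLc.
  by apply: PL_sum => i; apply: PL_pow.
have Zg : forall s, s != 0 -> g s = 0.
  move=> s nz; apply/eqP.
  suff : s *: g s == 0 by rewrite scaler_eq0 (negbTE nz).
  apply/eqP; rewrite /g scalerBr scalerDr scaler_sumr.
  have -> : \sum_(i < n) s *: (s ^+ i.+1 *: c i) = \sum_(i < n) s ^+ i.+2 *: c i.
    by apply: eq_bigr => i _; rewrite scalerA -exprS.
  apply/eqP; rewrite subr_eq0; apply/eqP; apply: (addrI (f p)); by rewrite addrA -H E.
have g0 : g 0 = d' - d.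
  rewrite /g r0 big1 ?addr0 // => i _.
  by rewrite expr0n /= scale0r.
apply/eqP; rewrite -subr_eq0 -g0; apply/eqP.
apply: sepV => phi Hphi.
apply: (PL_vanish (r := fun s => phi (g s))).
  exact: PL_lin.
by move=> s /Zg ->; rewrite (lin0 Hphi).
Qed.

Lemma DmapE f p v d : LD f p v d -> Dmap f p v = d.
Proof.
move=> H; rewrite /Dmap.
have ex : exists d, is_dir_deriv f p v d by exists d; exact: LD_dd.
have := epsilon_spec (inhabits (0 : V F)) _ ex.
by move/dd_uniq; apply.
Qed.

End VSec.


Lemma scaleo (k : numFieldType) (a b : k) : a *: (b : k^o) = a * b.
Proof. by []. Qed.

Ltac pushphi Hphi := repeat progress rewrite ?(linD Hphi) ?(linB Hphi) ?(linZ Hphi) ?(linN Hphi) ?(lin0 Hphi) ?scaleo.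

Section LieSec.
Variables (k : numFieldType) (F : vectType k).
Local Notation V := (V F).

Lemma lin_scale (X : lmodType k) (a : k) : lin (fun x : X => a *: x).
Proof. by move=> b x y; rewrite scalerDr !scalerA mulrC. Qed.

Lemma T1_scale (X : lmodType k) (a : k) (f : k -> X) x0 x1 :
  T1 f x0 x1 -> T1 (fun s => a *: f s) (a *: x0) (a *: x1).
Proof. by move=> H; have := T1_lin (lin_scale (X:=X) a) H. Qed.

Lemma Vfun (x y : V) : (forall phi : V -> k^o, lin phi -> phi x = phi y) -> x = y.
Proof.
move=> H; apply/eqP; rewrite -subr_eq0; apply/eqP; apply: sepV => phi Hphi.
by rewrite (linB Hphi) (H phi Hphi) subrr.
Qed.


Definition Good (f : V -> V) := exists (D : V -> V -> V) (D2 : V -> V -> V -> V),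
  (forall p v, LD f p v (D p v)) /\ (forall p, lin (D p)) /\
  (forall p v u, LD (fun q => D q v) p u (D2 p v u)) /\
  (forall p v u, D2 p v u = D2 p u v).

Lemma bracketE (f g : V -> V) Df Dg :
  (forall p v, LD f p v (Df p v)) -> (forall p v, LD g p v (Dg p v)) ->
  forall p, bracket f g p = Df p (g p) - Dg p (f p).
Proof. by move=> Hf Hg p; rewrite /bracket (DmapE (Hf _ _)) (DmapE (Hg _ _)). Qed.

Lemma LD_prod (g h : V -> V) Dg D2g Dh p u :
  (forall q, lin (Dg q)) -> (forall q v w, LD (fun q => Dg q v) q w (D2g q v w)) ->
  LD h p u Dh ->
  LD (fun q => Dg q (h q)) p u (D2g p (h p) u + Dg p Dh).
Proof.
move=> Hl HD [r [Hr [r0 E]]].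
have E1 : forall s, Dg (p + s *: u) (h (p + s *: u)) =
   Dg (p + s *: u) (h p) + s *: Dg (p + s *: u) (r s).
  by move=> s; rewrite E (linD (Hl _)) (linZ (Hl _)).
have [q [Hq [q0 Eq]]] := HD p (h p) u.
have P2 : PL (fun s => Dg (p + s *: u) (r s)).
  elim: Hr {E E1 r0} => [x|x r' Hr' IH].
    exact: (PL_T1 (HD p x u)).
  apply: (PL_ext (PL_add (PL_T1 (HD p x u)) (PL_mulX IH))) => s.
  by rewrite (linD (Hl _)) (linZ (Hl _)).
exists (fun s => q s + Dg (p + s *: u) (r s)); split; first exact: PL_add.
split=> [|s]; first by rewrite q0 r0 scale0r addr0.
by rewrite E1 Eq scalerDr addrA.
Qed.

Lemma LD_lc (f g : V -> V) (a : k) p v df dg :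
  LD f p v df -> LD g p v dg ->
  LD (fun q => a *: f q + g q) p v (a *: df + dg).
Proof. by move=> H1 H2; apply: T1_add => //; apply: T1_scale. Qed.

Lemma LD_sub (f g : V -> V) p v df dg :
  LD f p v df -> LD g p v dg -> LD (fun q => f q - g q) p v (df - dg).
Proof. by move=> H1 H2; apply: T1_sub. Qed.

Lemma LD_cst (x : V) p v : LD (fun _ => x) p v 0.
Proof. exact: T1_cst. Qed.

Lemma Good0 : Good (fun _ => 0).
Proof.
exists (fun _ _ => 0), (fun _ _ _ => 0); split; first by move=> *; exact: LD_cst.
split; first by move=> p a x y; rewrite scaler0 addr0.
by split=> // *; exact: LD_cst.
Qed.

Lemma Good_lc (f g : V -> V) (a : k) : Good f -> Good g -> Good (fun q => a *: f q + g q).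
Proof.
move=> [Df [D2f [H1 [H2 [H3 H4]]]]] [Dg [D2g [G1 [G2 [G3 G4]]]]].
exists (fun p v => a *: Df p v + Dg p v), (fun p v u => a *: D2f p v u + D2g p v u).
split; first by move=> p v; apply: LD_lc.
split.
  move=> p b x y; rewrite (linD (H2 p)) (linZ (H2 p)) (linD (G2 p)) (linZ (G2 p)).
  apply: Vfun => phi Hphi; pushphi Hphi; ring.
split; first by move=> p v u; apply: (LD_lc (f := fun q => Df q v) (g := fun q => Dg q v)).
by move=> p v u; rewrite H4 G4.
Qed.

Lemma jacobi (f g h : V -> V) : Good f -> Good g -> Good h ->
  forall p, bracket f (bracket g h) p + bracket g (bracket h f) p
            + bracket h (bracket f g) p = 0.
Proof.
move=> [Df [D2f [H1 [H2 [H3 H4]]]]] [Dg [D2g [G1 [G2 [G3 G4]]]]]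
       [Dh [D2h [K1 [K2 [K3 K4]]]]] p.
have Bgh := bracketE G1 K1.
have Bhf := bracketE K1 H1.
have Bfg := bracketE H1 G1.
have Lgh : forall p v, LD (bracket g h) p v
   ((D2g p (h p) v + Dg p (Dh p v)) - (D2h p (g p) v + Dh p (Dg p v))).
  move=> q v; have -> : bracket g h = fun q => Dg q (h q) - Dh q (g q).
    by apply: functional_extensionality => x; rewrite Bgh.
  by apply: LD_sub; apply: LD_prod.
have Lhf : forall p v, LD (bracket h f) p v
   ((D2h p (f p) v + Dh p (Df p v)) - (D2f p (h p) v + Df p (Dh p v))).
  move=> q v; have -> : bracket h f = fun q => Dh q (f q) - Df q (h q).
    by apply: functional_extensionality => x; rewrite Bhf.
  by apply: LD_sub; apply: LD_prod.
have Lfg : forall p v, LD (bracket f g) p v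
   ((D2f p (g p) v + Df p (Dg p v)) - (D2g p (f p) v + Dg p (Df p v))).
  move=> q v; have -> : bracket f g = fun q => Df q (g q) - Dg q (f q).
    by apply: functional_extensionality => x; rewrite Bfg.
  by apply: LD_sub; apply: LD_prod.
rewrite (bracketE H1 Lgh) (bracketE G1 Lhf) (bracketE K1 Lfg) Bgh Bhf Bfg.
rewrite !(linB (H2 p)) !(linB (G2 p)) !(linB (K2 p)).
rewrite (G4 p (f p) (h p)) (K4 p (f p) (g p)) (H4 p (g p) (h p)).
apply: Vfun => phi Hphi; pushphi Hphi; ring.
Qed.

End LieSec.

Section BrLin.
Variables (k : numFieldType) (F : vectType k).
Local Notation V := (V F).
Lemma br_lin1 (f g h : V -> V) (a : k) : Good f -> Good g -> Good h ->
  forall p, bracket (fun q => a *: f q + g q) h p = a *: bracket f h p + bracket g h p.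
Proof.
move=> [Df [D2f [H1 [H2 _]]]] [Dg [D2g [G1 [G2 _]]]] [Dh [D2h [K1 [K2 _]]]] p.
have L : forall p v, LD (fun q => a *: f q + g q) p v (a *: Df p v + Dg p v).
  by move=> q v; apply: LD_lc.
rewrite (bracketE L K1) (bracketE H1 K1) (bracketE G1 K1).
rewrite (linD (K2 p)) (linZ (K2 p)).
apply: Vfun => phi Hphi; pushphi Hphi; ring.
Qed.

Lemma br_lin2 (f g h : V -> V) (a : k) : Good f -> Good g -> Good h ->
  forall p, bracket h (fun q => a *: f q + g q) p = a *: bracket h f p + bracket h g p.
Proof.
move=> [Df [D2f [H1 [H2 _]]]] [Dg [D2g [G1 [G2 _]]]] [Dh [D2h [K1 [K2 _]]]] p.
have L : forall p v, LD (fun q => a *: f q + g q) p v (a *: Df p v + Dg p v).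
  by move=> q v; apply: LD_lc.
rewrite (bracketE K1 L) (bracketE K1 H1) (bracketE K1 G1).
rewrite (linD (K2 p)) (linZ (K2 p)).
apply: Vfun => phi Hphi; pushphi Hphi; ring.
Qed.
End BrLin.


Section FTS.
Variables (k : numFieldType) (F : vectType k).
Variables (t : F -> F -> F -> F) (w : F -> F -> k).
Hypothesis tl1 : forall (a : k) (x y u v : F), t (a *: x + y) u v = a *: t x u v + t y u v.
Hypothesis tl2 : forall (a : k) (x y u v : F), t u (a *: x + y) v = a *: t u x v + t u y v.
Hypothesis tl3 : forall (a : k) (x y u v : F), t u v (a *: x + y) = a *: t u v x + t u v y.
Hypothesis wl1 : forall (a : k) (x y u : F), w (a *: x + y) u = a * w x u + w y u.
Hypothesis wl2 : forall (a : k) (x y u : F), w u (a *: x + y) = a * w u x + w u y.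
Hypothesis wA : forall x y : F, w x y = - w y x.
Hypothesis A1 : forall u v x y z : F,
      t u v (t x y z) = t (t u v x) y z + t x (t v u y) z + t x y (t u v z).
Hypothesis A2 : forall x y z : F, w x y *: z = t x z y - t y z x.
Hypothesis A3 : forall x y z : F, w x y *: z = t y x z - t x y z.
Hypothesis A4 : forall u v x y : F, w u v * w x y = w (t y x u) v - w (t y x v) u.

Local Notation V := (V F).

Lemma Lt1 u v : lin (fun x => t x u v). Proof. by move=> *; apply: tl1. Qed.
Lemma Lt2 u v : lin (fun x => t u x v). Proof. by move=> *; apply: tl2. Qed.
Lemma Lt3 u v : lin (t u v). Proof. by move=> *; apply: tl3. Qed.
Lemma Lw1 u : lin (fun x => (w x u : k^o)). Proof. by move=> *; apply: wl1. Qed.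
Lemma Lw2 u : lin (fun x => (w u x : k^o)). Proof. by move=> *; apply: wl2. Qed.

Lemma tD1 x y u v : t (x + y) u v = t x u v + t y u v. Proof. exact: (linD (Lt1 u v)). Qed.
Lemma tD2 x y u v : t u (x + y) v = t u x v + t u y v. Proof. exact: (linD (Lt2 u v)). Qed.
Lemma tD3 x y u v : t u v (x + y) = t u v x + t u v y. Proof. exact: (linD (Lt3 u v)). Qed.
Lemma tZ1 a x u v : t (a *: x) u v = a *: t x u v. Proof. exact: (linZ (Lt1 u v)). Qed.
Lemma tZ2 a x u v : t u (a *: x) v = a *: t u x v. Proof. exact: (linZ (Lt2 u v)). Qed.
Lemma tZ3 a x u v : t u v (a *: x) = a *: t u v x. Proof. exact: (linZ (Lt3 u v)). Qed.
Lemma tN1 x u v : t (- x) u v = - t x u v. Proof. exact: (linN (Lt1 u v)). Qed.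
Lemma tN2 x u v : t u (- x) v = - t u x v. Proof. exact: (linN (Lt2 u v)). Qed.
Lemma tN3 x u v : t u v (- x) = - t u v x. Proof. exact: (linN (Lt3 u v)). Qed.
Lemma t01 u v : t 0 u v = 0. Proof. exact: (lin0 (Lt1 u v)). Qed.
Lemma t02 u v : t u 0 v = 0. Proof. exact: (lin0 (Lt2 u v)). Qed.
Lemma t03 u v : t u v 0 = 0. Proof. exact: (lin0 (Lt3 u v)). Qed.
Lemma wD1 x y u : w (x + y) u = w x u + w y u. Proof. exact: (linD (Lw1 u)). Qed.
Lemma wD2 x y u : w u (x + y) = w u x + w u y. Proof. exact: (linD (Lw2 u)). Qed.
Lemma wZ1 a x u : w (a *: x) u = a * w x u. Proof. exact: (linZ (Lw1 u)). Qed.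
Lemma wZ2 a x u : w u (a *: x) = a * w u x. Proof. exact: (linZ (Lw2 u)). Qed.
Lemma wN1 x u : w (- x) u = - w x u. Proof. exact: (linN (Lw1 u)). Qed.
Lemma wN2 x u : w u (- x) = - w u x. Proof. exact: (linN (Lw2 u)). Qed.
Lemma wB1 x y u : w (x - y) u = w x u - w y u. Proof. exact: (linB (Lw1 u)). Qed.
Lemma wB2 x y u : w u (x - y) = w u x - w u y. Proof. exact: (linB (Lw2 u)). Qed.
Lemma w01 u : w 0 u = 0. Proof. exact: (lin0 (Lw1 u)). Qed.
Lemma w02 u : w u 0 = 0. Proof. exact: (lin0 (Lw2 u)). Qed.

Ltac twnorm := repeat progress rewrite ?tD1 ?tD2 ?tD3 ?tZ1 ?tZ2 ?tZ3 ?tN1 ?tN2 ?tN3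
  ?t01 ?t02 ?t03 ?wD1 ?wD2 ?wZ1 ?wZ2 ?wN1 ?wN2 ?w01 ?w02 ?scaleo.

Lemma tril_t : tril t.
Proof. by split; [exact: Lt1|split; [exact: Lt2|exact: Lt3]]. Qed.
Lemma bil_w : bil (fun x y => (w x y : k^o)).
Proof. by split; [exact: Lw1|exact: Lw2]. Qed.
Lemma bil_sm : bil (fun (a : k^o) (x : F) => a *: x).
Proof.
split=> [y|a] b x z; first by rewrite scalerDl scalerA.
by rewrite scalerDr !scalerA mulrC.
Qed.
Lemma bil_mul : bil (fun (a b : k^o) => (a * b : k^o)).
Proof.
split=> [y|a] b x z; rewrite !scaleo; first by rewrite mulrDl mulrA.
by rewrite mulrDr mulrCA.
Qed.

Lemma T1_t f g h x0 x1 y0 y1 z0 z1 :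
  T1 f x0 x1 -> T1 g y0 y1 -> T1 h z0 z1 ->
  T1 (fun s => t (f s) (g s) (h s)) (t x0 y0 z0) (t x1 y0 z0 + t x0 y1 z0 + t x0 y0 z1).
Proof. exact: T1_tril tril_t. Qed.
Lemma T1_w (f g : k -> F) x0 x1 y0 y1 :
  T1 f x0 x1 -> T1 g y0 y1 ->
  T1 (fun s => (w (f s) (g s) : k^o)) (w x0 y0) (w x1 y0 + w x0 y1).
Proof. exact: (T1_bil bil_w). Qed.
Lemma T1_sm (f : k -> k^o) (g : k -> F) x0 x1 y0 y1 :
  T1 f x0 x1 -> T1 g y0 y1 ->
  T1 (fun s => f s *: g s) (x0 *: y0) (x1 *: y0 + x0 *: y1).
Proof. exact: (T1_bil bil_sm). Qed.
Lemma T1_mul (f g : k -> k^o) x0 x1 y0 y1 :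
  T1 f x0 x1 -> T1 g y0 y1 ->
  T1 (fun s => (f s * g s : k^o)) (x0 * y0) (x1 * y0 + x0 * y1).
Proof. exact: (T1_bil bil_mul). Qed.
Lemma T1_fst (p v : V) : T1 (fun s => (p + s *: v).1) p.1 v.1.
Proof. exact: T1_line. Qed.
Lemma T1_snd (p v : V) : T1 (fun s => ((p + s *: v).2 : k^o)) p.2 v.2.
Proof. exact: T1_line. Qed.

Ltac t1step := first [ apply: T1_cst | apply: T1_fst | apply: T1_snd | apply: T1_pair
  | apply: T1_sub | apply: T1_add | apply: T1_opp | apply: T1_t | apply: T1_w
  | apply: T1_sm | apply: T1_mul ].

Lemma Ffun (x y : F) : (forall phi : F -> k^o, lin phi -> phi x = phi y) -> x = y.
Proof.
move=> H; apply/eqP; rewrite -subr_eq0; apply/eqP; apply: sepF => phi Hphi.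
by rewrite (linB Hphi) (H phi Hphi) subrr.
Qed.

Lemma lck1 (c1 : k) (L R x1 y1 : k) :
  x1 = y1 -> L - R = c1 * (x1 - y1) -> L = R.
Proof. move=> e1 E; apply/eqP; rewrite -subr_eq0 E; rewrite e1; apply/eqP; ring. Qed.
Lemma lcF1 (c1 : k) (L R x1 y1 : F) :
  x1 = y1 -> (forall phi : F -> k^o, lin phi -> phi L - phi R = c1 * (phi x1 - phi y1)) -> L = R.
Proof.
move=> e1 E; apply: Ffun => phi Hphi; apply/eqP; rewrite -subr_eq0 (E phi Hphi).
rewrite e1; apply/eqP; ring.
Qed.

Lemma lck2 (c1 c2 : k) (L R x1 y1 x2 y2 : k) :
  x1 = y1 -> x2 = y2 -> L - R = c1 * (x1 - y1) + c2 * (x2 - y2) -> L = R.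
Proof. move=> e1 e2 E; apply/eqP; rewrite -subr_eq0 E; rewrite e1 e2; apply/eqP; ring. Qed.
Lemma lcF2 (c1 c2 : k) (L R x1 y1 x2 y2 : F) :
  x1 = y1 -> x2 = y2 -> (forall phi : F -> k^o, lin phi -> phi L - phi R = c1 * (phi x1 - phi y1) + c2 * (phi x2 - phi y2)) -> L = R.
Proof.
move=> e1 e2 E; apply: Ffun => phi Hphi; apply/eqP; rewrite -subr_eq0 (E phi Hphi).
rewrite e1 e2; apply/eqP; ring.
Qed.

Lemma lck3 (c1 c2 c3 : k) (L R x1 y1 x2 y2 x3 y3 : k) :
  x1 = y1 -> x2 = y2 -> x3 = y3 -> L - R = c1 * (x1 - y1) + c2 * (x2 - y2) + c3 * (x3 - y3) -> L = R.
Proof. move=> e1 e2 e3 E; apply/eqP; rewrite -subr_eq0 E; rewrite e1 e2 e3; apply/eqP; ring. Qed.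
Lemma lcF3 (c1 c2 c3 : k) (L R x1 y1 x2 y2 x3 y3 : F) :
  x1 = y1 -> x2 = y2 -> x3 = y3 -> (forall phi : F -> k^o, lin phi -> phi L - phi R = c1 * (phi x1 - phi y1) + c2 * (phi x2 - phi y2) + c3 * (phi x3 - phi y3)) -> L = R.
Proof.
move=> e1 e2 e3 E; apply: Ffun => phi Hphi; apply/eqP; rewrite -subr_eq0 (E phi Hphi).
rewrite e1 e2 e3; apply/eqP; ring.
Qed.

Lemma lck4 (c1 c2 c3 c4 : k) (L R x1 y1 x2 y2 x3 y3 x4 y4 : k) :
  x1 = y1 -> x2 = y2 -> x3 = y3 -> x4 = y4 -> L - R = c1 * (x1 - y1) + c2 * (x2 - y2) + c3 * (x3 - y3) + c4 * (x4 - y4) -> L = R.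
Proof. move=> e1 e2 e3 e4 E; apply/eqP; rewrite -subr_eq0 E; rewrite e1 e2 e3 e4; apply/eqP; ring. Qed.
Lemma lcF4 (c1 c2 c3 c4 : k) (L R x1 y1 x2 y2 x3 y3 x4 y4 : F) :
  x1 = y1 -> x2 = y2 -> x3 = y3 -> x4 = y4 -> (forall phi : F -> k^o, lin phi -> phi L - phi R = c1 * (phi x1 - phi y1) + c2 * (phi x2 - phi y2) + c3 * (phi x3 - phi y3) + c4 * (phi x4 - phi y4)) -> L = R.
Proof.
move=> e1 e2 e3 e4 E; apply: Ffun => phi Hphi; apply/eqP; rewrite -subr_eq0 (E phi Hphi).
rewrite e1 e2 e3 e4; apply/eqP; ring.
Qed.

Lemma lck5 (c1 c2 c3 c4 c5 : k) (L R x1 y1 x2 y2 x3 y3 x4 y4 x5 y5 : k) :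
  x1 = y1 -> x2 = y2 -> x3 = y3 -> x4 = y4 -> x5 = y5 -> L - R = c1 * (x1 - y1) + c2 * (x2 - y2) + c3 * (x3 - y3) + c4 * (x4 - y4) + c5 * (x5 - y5) -> L = R.
Proof. move=> e1 e2 e3 e4 e5 E; apply/eqP; rewrite -subr_eq0 E; rewrite e1 e2 e3 e4 e5; apply/eqP; ring. Qed.
Lemma lcF5 (c1 c2 c3 c4 c5 : k) (L R x1 y1 x2 y2 x3 y3 x4 y4 x5 y5 : F) :
  x1 = y1 -> x2 = y2 -> x3 = y3 -> x4 = y4 -> x5 = y5 -> (forall phi : F -> k^o, lin phi -> phi L - phi R = c1 * (phi x1 - phi y1) + c2 * (phi x2 - phi y2) + c3 * (phi x3 - phi y3) + c4 * (phi x4 - phi y4) + c5 * (phi x5 - phi y5)) -> L = R.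
Proof.
move=> e1 e2 e3 e4 e5 E; apply: Ffun => phi Hphi; apply/eqP; rewrite -subr_eq0 (E phi Hphi).
rewrite e1 e2 e3 e4 e5; apply/eqP; ring.
Qed.

Lemma lck6 (c1 c2 c3 c4 c5 c6 : k) (L R x1 y1 x2 y2 x3 y3 x4 y4 x5 y5 x6 y6 : k) :
  x1 = y1 -> x2 = y2 -> x3 = y3 -> x4 = y4 -> x5 = y5 -> x6 = y6 -> L - R = c1 * (x1 - y1) + c2 * (x2 - y2) + c3 * (x3 - y3) + c4 * (x4 - y4) + c5 * (x5 - y5) + c6 * (x6 - y6) -> L = R.
Proof. move=> e1 e2 e3 e4 e5 e6 E; apply/eqP; rewrite -subr_eq0 E; rewrite e1 e2 e3 e4 e5 e6; apply/eqP; ring. Qed.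
Lemma lcF6 (c1 c2 c3 c4 c5 c6 : k) (L R x1 y1 x2 y2 x3 y3 x4 y4 x5 y5 x6 y6 : F) :
  x1 = y1 -> x2 = y2 -> x3 = y3 -> x4 = y4 -> x5 = y5 -> x6 = y6 -> (forall phi : F -> k^o, lin phi -> phi L - phi R = c1 * (phi x1 - phi y1) + c2 * (phi x2 - phi y2) + c3 * (phi x3 - phi y3) + c4 * (phi x4 - phi y4) + c5 * (phi x5 - phi y5) + c6 * (phi x6 - phi y6)) -> L = R.
Proof.
move=> e1 e2 e3 e4 e5 e6 E; apply: Ffun => phi Hphi; apply/eqP; rewrite -subr_eq0 (E phi Hphi).
rewrite e1 e2 e3 e4 e5 e6; apply/eqP; ring.
Qed.

Lemma lck7 (c1 c2 c3 c4 c5 c6 c7 : k) (L R x1 y1 x2 y2 x3 y3 x4 y4 x5 y5 x6 y6 x7 y7 : k) :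
  x1 = y1 -> x2 = y2 -> x3 = y3 -> x4 = y4 -> x5 = y5 -> x6 = y6 -> x7 = y7 -> L - R = c1 * (x1 - y1) + c2 * (x2 - y2) + c3 * (x3 - y3) + c4 * (x4 - y4) + c5 * (x5 - y5) + c6 * (x6 - y6) + c7 * (x7 - y7) -> L = R.
Proof. move=> e1 e2 e3 e4 e5 e6 e7 E; apply/eqP; rewrite -subr_eq0 E; rewrite e1 e2 e3 e4 e5 e6 e7; apply/eqP; ring. Qed.
Lemma lcF7 (c1 c2 c3 c4 c5 c6 c7 : k) (L R x1 y1 x2 y2 x3 y3 x4 y4 x5 y5 x6 y6 x7 y7 : F) :
  x1 = y1 -> x2 = y2 -> x3 = y3 -> x4 = y4 -> x5 = y5 -> x6 = y6 -> x7 = y7 -> (forall phi : F -> k^o, lin phi -> phi L - phi R = c1 * (phi x1 - phi y1) + c2 * (phi x2 - phi y2) + c3 * (phi x3 - phi y3) + c4 * (phi x4 - phi y4) + c5 * (phi x5 - phi y5) + c6 * (phi x6 - phi y6) + c7 * (phi x7 - phi y7)) -> L = R.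
Proof.
move=> e1 e2 e3 e4 e5 e6 e7 E; apply: Ffun => phi Hphi; apply/eqP; rewrite -subr_eq0 (E phi Hphi).
rewrite e1 e2 e3 e4 e5 e6 e7; apply/eqP; ring.
Qed.
Lemma lcF8 (c1 c2 c3 c4 c5 c6 c7 c8 : k) (L R x1 y1 x2 y2 x3 y3 x4 y4 x5 y5 x6 y6 x7 y7 x8 y8 : F) :
  x1 = y1 -> x2 = y2 -> x3 = y3 -> x4 = y4 -> x5 = y5 -> x6 = y6 -> x7 = y7 -> x8 = y8 -> (forall phi : F -> k^o, lin phi -> phi L - phi R = c1 * (phi x1 - phi y1) + c2 * (phi x2 - phi y2) + c3 * (phi x3 - phi y3) + c4 * (phi x4 - phi y4) + c5 * (phi x5 - phi y5) + c6 * (phi x6 - phi y6) + c7 * (phi x7 - phi y7) + c8 * (phi x8 - phi y8)) -> L = R.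
Proof.
move=> e1 e2 e3 e4 e5 e6 e7 e8 E; apply: Ffun => phi Hphi; apply/eqP; rewrite -subr_eq0 (E phi Hphi).
rewrite e1 e2 e3 e4 e5 e6 e7 e8; apply/eqP; ring.
Qed.

Lemma lcF9 (c1 c2 c3 c4 c5 c6 c7 c8 c9 : k) (L R x1 y1 x2 y2 x3 y3 x4 y4 x5 y5 x6 y6 x7 y7 x8 y8 x9 y9 : F) :
  x1 = y1 -> x2 = y2 -> x3 = y3 -> x4 = y4 -> x5 = y5 -> x6 = y6 -> x7 = y7 -> x8 = y8 -> x9 = y9 -> (forall phi : F -> k^o, lin phi -> phi L - phi R = c1 * (phi x1 - phi y1) + c2 * (phi x2 - phi y2) + c3 * (phi x3 - phi y3) + c4 * (phi x4 - phi y4) + c5 * (phi x5 - phi y5) + c6 * (phi x6 - phi y6) + c7 * (phi x7 - phi y7) + c8 * (phi x8 - phi y8) + c9 * (phi x9 - phi y9)) -> L = R.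
Proof.
move=> e1 e2 e3 e4 e5 e6 e7 e8 e9 E; apply: Ffun => phi Hphi; apply/eqP; rewrite -subr_eq0 (E phi Hphi).
rewrite e1 e2 e3 e4 e5 e6 e7 e8 e9; apply/eqP; ring.
Qed.

Lemma lcF10 (c1 c2 c3 c4 c5 c6 c7 c8 c9 c10 : k) (L R x1 y1 x2 y2 x3 y3 x4 y4 x5 y5 x6 y6 x7 y7 x8 y8 x9 y9 x10 y10 : F) :
  x1 = y1 -> x2 = y2 -> x3 = y3 -> x4 = y4 -> x5 = y5 -> x6 = y6 -> x7 = y7 -> x8 = y8 -> x9 = y9 -> x10 = y10 -> (forall phi : F -> k^o, lin phi -> phi L - phi R = c1 * (phi x1 - phi y1) + c2 * (phi x2 - phi y2) + c3 * (phi x3 - phi y3) + c4 * (phi x4 - phi y4) + c5 * (phi x5 - phi y5) + c6 * (phi x6 - phi y6) + c7 * (phi x7 - phi y7) + c8 * (phi x8 - phi y8) + c9 * (phi x9 - phi y9) + c10 * (phi x10 - phi y10)) -> L = R.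
Proof.
move=> e1 e2 e3 e4 e5 e6 e7 e8 e9 e10 E; apply: Ffun => phi Hphi; apply/eqP; rewrite -subr_eq0 (E phi Hphi).
rewrite e1 e2 e3 e4 e5 e6 e7 e8 e9 e10; apply/eqP; ring.
Qed.

Lemma Veq (x1 x2 : F) (y1 y2 : k) : x1 = x2 -> y1 = y2 -> ((x1, y1 : k^o) : V) = (x2, y2 : k^o).
Proof. by move=> -> ->. Qed.

Ltac pushall := match goal with H : lin ?phi |- _ => pushphi H end.
Lemma pairD (x1 x2 : F) (y1 y2 : k) : ((x1, y1 : k^o) : V) + (x2, y2 : k^o) = (x1 + x2, y1 + y2 : k^o).
Proof. by []. Qed.
Lemma pairZ (c : k) (x1 : F) (y1 : k) : c *: ((x1, y1 : k^o) : V) = (c *: x1, c * y1 : k^o).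
Proof. by []. Qed.
Lemma pairN (x1 : F) (y1 : k) : - ((x1, y1 : k^o) : V) = (- x1, - y1 : k^o).
Proof. by []. Qed.
Lemma pair0 : (0 : V) = (0, 0 : k^o).
Proof. by []. Qed.
Ltac pairs := repeat progress rewrite ?pairZ ?pairN ?pairD.
Ltac veq := pairs; apply: Veq; [twnorm; apply: Ffun => ? ?; pushall; field; done | twnorm; field; done].
Ltac t1auto := rewrite /LD /=; eapply T1_conv; [repeat t1step | by [] | ].

Definition DK (p v : V) : V := 0.
Definition DU a (p v : V) : V := mkV 0 (w a v.1).
Definition DS a b (p v : V) : V := mkV (t a b v.1) (- v.2 * w a b).
Definition DUt a (p v : V) : V :=
  mkV (- (1/2) *: (t v.1 a p.1 + t p.1 a v.1) - (1/2 * v.2) *: a)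
      (1/6 * w (t v.1 p.1 p.1 + t p.1 v.1 p.1 + t p.1 p.1 v.1) a
       - 1/2 * v.2 * w a p.1 - 1/2 * p.2 * w a v.1).
Definition D2Ut a (p v u : V) : V :=
  mkV (- (1/2) *: (t v.1 a u.1 + t u.1 a v.1))
      (1/6 * w (t v.1 u.1 p.1 + t v.1 p.1 u.1 + t u.1 v.1 p.1 + t p.1 v.1 u.1
               + t u.1 p.1 v.1 + t p.1 u.1 v.1) a
       - 1/2 * v.2 * w a u.1 - 1/2 * u.2 * w a v.1).
Definition Z3 (z v : F) := t v z z + t z v z + t z z v.
Definition Z6 (z v u : F) := t v u z + t v z u + t u v z + t z v u + t u z v + t z u v.
Definition DKt a b (p v : V) : V :=
  mkV ((1/6 * w a b) *: Z3 p.1 v.1 + (1/2 * w a b) *: (v.2 *: p.1 + p.2 *: v.1))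
      (- (1/12) * w a b * (w (Z3 p.1 v.1) p.1 + w (t p.1 p.1 p.1) v.1) + p.2 * v.2 * w a b).
Definition D2Kt a b (p v u : V) : V :=
  mkV ((1/6 * w a b) *: Z6 p.1 v.1 u.1 + (1/2 * w a b) *: (v.2 *: u.1 + u.2 *: v.1))
      (- (1/12) * w a b * (w (Z6 p.1 v.1 u.1) p.1 + w (Z3 p.1 v.1) u.1 + w (Z3 p.1 u.1) v.1)
       + u.2 * v.2 * w a b).

Lemma LD_K a b p v : LD (Kmap w a b) p v (DK p v).
Proof. by t1auto. Qed.
Lemma LD_U a p v : LD (Umap w a) p v (DU a p v).
Proof. t1auto; rewrite /DU /mkV; veq. Qed.
Lemma LD_S a b p v : LD (Smap t w a b) p v (DS a b p v).
Proof. t1auto; rewrite /DS /mkV; veq. Qed.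
Lemma LD_Ut a p v : LD (Utmap t w a) p v (DUt a p v).
Proof. t1auto; rewrite /DUt /mkV; veq. Qed.
Lemma LD_Kt a b p v : LD (Ktmap t w a b) p v (DKt a b p v).
Proof. t1auto; rewrite /DKt /Z3 /mkV; veq. Qed.
Lemma LD_DUt a p v u : LD (fun q => DUt a q v) p u (D2Ut a p v u).
Proof. t1auto; rewrite /D2Ut /mkV; veq. Qed.
Lemma LD_DKt a b p v u : LD (fun q => DKt a b q v) p u (D2Kt a b p v u).
Proof. rewrite /DKt /Z3; t1auto; rewrite /D2Kt /Z6 /Z3 /mkV; veq. Qed.


Lemma Good_K a b : Good (Kmap w a b).
Proof.
exists DK, (fun _ _ _ => 0); split; first exact: LD_K.
split; first by move=> p c x y; rewrite /DK scaler0 addr0.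
by split=> // p v u; rewrite /DK; exact: LD_cst.
Qed.
Lemma Good_U a : Good (Umap w a).
Proof.
exists (DU a), (fun _ _ _ => 0); split; first exact: LD_U.
split; first by move=> p c x y; rewrite /DU /mkV /=; veq.
by split=> // p v u; rewrite /DU; exact: LD_cst.
Qed.
Lemma Good_S a b : Good (Smap t w a b).
Proof.
exists (DS a b), (fun _ _ _ => 0); split; first exact: LD_S.
split; first by move=> p c x y; rewrite /DS /mkV /=; veq.
by split=> // p v u; rewrite /DS; exact: LD_cst.
Qed.
Lemma Good_Ut a : Good (Utmap t w a).
Proof.
exists (DUt a), (D2Ut a); split; first exact: LD_Ut.
split; first by move=> p c x y; rewrite /DUt /mkV /=; veq.
split; first exact: LD_DUt.
by move=> p v u; rewrite /D2Ut /mkV /=; veq.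
Qed.
Lemma Good_Kt a b : Good (Ktmap t w a b).
Proof.
exists (DKt a b), (D2Kt a b); split; first exact: LD_Kt.
split; first by move=> p c x y; rewrite /DKt /Z3 /mkV /=; veq.
split; first exact: LD_DKt.
by move=> p v u; rewrite /D2Kt /Z6 /Z3 /mkV /=; veq.
Qed.

Lemma Good_gen f : generator t w f -> Good f.
Proof.
case=> [[a [b ->]]|[[a ->]|[[a [b ->]]|[[a ->]|[a [b ->]]]]]].
- exact: Good_K.
- exact: Good_U.
- exact: Good_S.
- exact: Good_Ut.
- exact: Good_Kt.
Qed.

Lemma Good_span f : inspan t w f -> Good f.
Proof.
elim=> [|g Hg|a g h _ Hg _ Hh]; first exact: Good0.
- exact: Good_gen.
- exact: Good_lc.
Qed.


Lemma tP12 x y z : t y x z = t x y z + w x y *: z.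
Proof. by rewrite A3 addrC subrK. Qed.
Lemma tP13 x y z : t z y x = t x y z - w x z *: y.
Proof. by rewrite A2 opprB addrC subrK. Qed.

Lemma L1 b a c y : w (t b a c) y = w (t a b y) c.
Proof.
have e := A4 y c b a.
rewrite (tP12 a b c) wD1 wZ1; rewrite (wA y c) (wA b a) in e.
apply: (lck1 (c1 := 1) e); ring.
Qed.

Lemma L2 a b u v : w (t a b u) v = - w u (t a b v) - w a b * w u v.
Proof.
have e := A4 u v b a; rewrite (wA b a) (wA (t a b v) u) in e.
apply: (lck1 (c1 := -1) e); ring.
Qed.

Lemma tP12' x y z : t x y z = t y x z - w x y *: z.
Proof. by rewrite (tP12 x y z) addrK. Qed.
Lemma tP13' x y z : t x y z = t z y x + w x z *: y.
Proof. by rewrite (tP13 x y z) subrK. Qed.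

Lemma wzz z : w z z = 0.
Proof.
have := wA z z; move/eqP; rewrite -addr_eq0 -mulr2n mulrn_eq0 /= => /eqP //.
Qed.

Lemma G6 x z a : w (t z x z) a = w (t z a z) x.
Proof.
by rewrite (L1 z x z a) (L1 z a z x) (tP13' x z a) wD1 wZ1 wzz mulr0 addr0.
Qed.

Lemma I2 z a : w (t z z z) a = w (t z a z) z.
Proof.
rewrite (L1 z z z a) (tP13 a z z) (tP12' a z z) wB1 wZ1 wzz mulr0 subr0.
by rewrite wB1 wZ1 wzz mulr0 subr0.
Qed.
Lemma G1 c z : w (t c z z) z = w (t z z z) c.
Proof. by rewrite I2 (tP12' c z z) wB1 wZ1 wzz mulr0 subr0. Qed.
Lemma G3 c z : w (t z z c) z = w (t z z z) c.
Proof. by rewrite (tP13 c z z) wB1 wZ1 wzz mulr0 subr0 G1. Qed.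
Lemma G4 x z a : w (t x z z) a = w (t z a z) x - w x z * w z a.
Proof. by rewrite (tP12' x z z) wB1 wZ1 G6. Qed.
Lemma G5 x z a : w (t z z x) a = w (t z a z) x - 2 * w x z * w z a.
Proof. by rewrite (tP13 x z z) wB1 wZ1 G4; ring. Qed.

Lemma I3 z a b : w (t z z z) (t a b z) = -(1/2) * w a b * w (t z z z) z.
Proof.
have e := congr1 (fun u => w u z) (A1 a b z z z); simpl in e.
rewrite L2 !wD1 G1 G3 -I2 I2 (tP12 a b z) wD2 wZ2 I2 in e.
rewrite I2; apply: (lck1 (c1 := -1/4) e); by field.
Qed.

Lemma Q4 z a b : 6 * w (t z a z) (t z b z) + 4 * w a z * w (t z z z) b
   - 4 * w b z * w (t z z z) a = w a b * w (t z z z) z.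
Proof.
have e := I3 z a b.
rewrite (wA (t z z z) (t a b z)) (tP13' a b z) wD1 wZ1 (L1 z b a) (A1 b z z z z) in e.
rewrite !wD1 (G4 (t b z z) z a) (G6 (t z b z) z a) (G5 (t b z z) z a) in e.
rewrite (tP12' b z z) !wB2 !wB1 !wZ2 !wZ1 wzz -(I2 z a) (wA b (t z z z)) (wA z a) in e.
rewrite -(I2 z b) in e.
apply: (lck1 (c1 := -2) e); by field.
Qed.

Ltac finF := apply: Ffun => ? ?; pushall; by field.
Ltac twnormin H := repeat progress rewrite ?tD1 ?tD2 ?tD3 ?tZ1 ?tZ2 ?tZ3 ?tN1 ?tN2 ?tN3
  ?t01 ?t02 ?t03 ?wD1 ?wD2 ?wZ1 ?wZ2 ?wN1 ?wN2 ?w01 ?w02 ?scaleo in H.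

Lemma I5 z c : t z (t z c z) z = (2/3 * w (t z z z) c) *: z + (2/3 * w c z) *: t z z z
   - (1/6 * w (t z z z) z) *: c.
Proof.
have e1 := A1 z c z z z.
rewrite (tP13 (t z c z) z z) (tP12' (t z c z) z z) (tP12' c z z) in e1.
twnormin e1; rewrite -(I2 z c) in e1.
have e2 := A1 z z z c z.
rewrite (tP13 (t z c z) z z) (tP12' (t z c z) z z) (tP13' (t z z z) c z) in e2.
rewrite (tP13 c z z) (tP12' c z z) in e2.
twnormin e2; rewrite -(I2 z c) in e2.
apply: (lcF2 (c1 := -1/3) (c2 := -1/6) e1 e2) => phi Hphi; pushphi Hphi; by field.
Qed.

Lemma T5 z c : t z c (t z z z) = - (w (t z z z) c) *: z - (1/2 * w (t z z z) z) *: c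
   + (w c z) *: t z z z.
Proof.
have e2 := A1 z z z c z.
rewrite (tP13 (t z c z) z z) (tP12' (t z c z) z z) (tP13' (t z z z) c z) in e2.
rewrite (tP13 c z z) (tP12' c z z) in e2.
twnormin e2; rewrite -(I2 z c) in e2.
apply: (lcF1 (c1 := -1/2) e2) => phi Hphi; pushphi Hphi; by field.
Qed.

Lemma J z c : w (t z z z) (t z c z) = 1/2 * w c z * w (t z z z) z.
Proof. rewrite (tP12 c z z) wD2 wZ2 I3; by field. Qed.

Lemma R_SS a b c d p : bracket (Smap t w a b) (Smap t w c d) p = Smap t w (t a b c) d p + Smap t w c (t b a d) p.
Proof.
rewrite (bracketE (LD_S a b) (LD_S c d)) /DK /DU /DS /DUt /DKt /Z3 /Kmap /Umap /Smap /Utmap /Ktmap /mkV /=.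
rewrite ?pair0; pairs; apply: Veq.
- rewrite (A1 a b c d p.1); twnorm; finF.
- have e2 := congr1 (w c) (A3 a b d); twnormin e2.
  apply: (lck4 (c1 := -p.2) (c2 := -p.2) (c3 := p.2 * w c d) (c4 := p.2) (A4 c d b a) e2 (wA b a) (wA (t a b d) c)); by field.
Qed.

Lemma R_SU a b c p : bracket (Smap t w a b) (Umap w c) p = Umap w (t a b c) p.
Proof.
rewrite (bracketE (LD_S a b) (LD_U c)) /DK /DU /DS /DUt /DKt /Z3 /Kmap /Umap /Smap /Utmap /Ktmap /mkV /=.
rewrite ?pair0; pairs; apply: Veq.
- twnorm; finF.
- apply: (lck3 (c1 := 1) (c2 := - w c p.1) (c3 := -1) (A4 c p.1 b a) (wA b a) (wA (t a b p.1) c)); by field.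
Qed.

Lemma R_SK a b c d p : bracket (Smap t w a b) (Kmap w c d) p = w c d *: Kmap w b a p.
Proof.
rewrite (bracketE (LD_S a b) (LD_K c d)) /DK /DU /DS /DUt /DKt /Z3 /Kmap /Umap /Smap /Utmap /Ktmap /mkV /=.
rewrite ?pair0; pairs; apply: Veq.
- twnorm; finF.
- apply: (lck1 (c1 := -2 * w c d) (wA b a)); by field.
Qed.

Lemma R_UU a b p : bracket (Umap w a) (Umap w b) p = Kmap w a b p.
Proof.
rewrite (bracketE (LD_U a) (LD_U b)) /DK /DU /DS /DUt /DKt /Z3 /Kmap /Umap /Smap /Utmap /Ktmap /mkV /=.
rewrite ?pair0; pairs; apply: Veq.
- twnorm; finF.
- apply: (lck1 (c1 := -1) (wA b a)); by field.
Qed.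

Lemma R_SUt a b c p : bracket (Smap t w a b) (Utmap t w c) p = Utmap t w (t b a c) p.
Proof.
rewrite (bracketE (LD_S a b) (LD_Ut c)) /DK /DU /DS /DUt /DKt /Z3 /Kmap /Umap /Smap /Utmap /Ktmap /mkV /=.
rewrite ?pair0; pairs; apply: Veq.
- apply: (lcF2 (c1 := -1/2) (c2 := -p.2/2) (A1 a b p.1 c p.1) (A3 a b c)) => phi Hphi; twnorm; pushphi Hphi; by field.
- twnorm; rewrite (wA (t p.1 p.1 p.1) (t b a c)) (L1 b a c (t p.1 p.1 p.1)) (A1 a b p.1 p.1 p.1) (tP12 a b p.1) (L1 b a c p.1) (wA (t a b p.1) c); twnorm; by field.
Qed.

Lemma R_SKt a b c d p : bracket (Smap t w a b) (Ktmap t w c d) p = w c d *: Ktmap t w a b p.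
Proof.
rewrite (bracketE (LD_S a b) (LD_Kt c d)) /DK /DU /DS /DUt /DKt /Z3 /Kmap /Umap /Smap /Utmap /Ktmap /mkV /=.
rewrite ?pair0; pairs; apply: Veq.
- twnorm; rewrite (A1 a b p.1 p.1 p.1) (tP12 a b p.1); twnorm; finF.
- twnorm; rewrite (G1 (t a b p.1) p.1) -(I2 p.1 (t a b p.1)) (G3 (t a b p.1) p.1) (I3 p.1 a b); by field.
Qed.

Lemma R_UUt a b p : bracket (Umap w a) (Utmap t w b) p = Smap t w a b p.
Proof.
rewrite (bracketE (LD_U a) (LD_Ut b)) /DK /DU /DS /DUt /DKt /Z3 /Kmap /Umap /Smap /Utmap /Ktmap /mkV /=.
rewrite ?pair0; pairs; apply: Veq.
- apply: (lcF1 (c1 := 1/2) (A2 a p.1 b)) => phi Hphi; twnorm; pushphi Hphi; by field.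
- twnorm; rewrite (wA a (t p.1 b p.1)) (G4 a p.1 b) (G6 a p.1 b) (G5 a p.1 b) (wA p.1 b) (wA b a); by field.
Qed.

Lemma R_UKt a c d p : bracket (Umap w a) (Ktmap t w c d) p = w c d *: Utmap t w a p.
Proof.
rewrite (bracketE (LD_U a) (LD_Kt c d)) /DK /DU /DS /DUt /DKt /Z3 /Kmap /Umap /Smap /Utmap /Ktmap /mkV /=.
rewrite ?pair0; pairs; apply: Veq.
- twnorm; rewrite (tP13 a p.1 p.1) (tP12' a p.1 p.1); twnorm; finF.
- twnorm; rewrite (G1 a p.1) -(I2 p.1 a) (G3 a p.1) (wA a (t p.1 p.1 p.1)); by field.
Qed.

Lemma R_KUt a b c p : bracket (Kmap w a b) (Utmap t w c) p = w a b *: Umap w c p.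
Proof.
rewrite (bracketE (LD_K a b) (LD_Ut c)) /DK /DU /DS /DUt /DKt /Z3 /Kmap /Umap /Smap /Utmap /Ktmap /mkV /=.
rewrite ?pair0; pairs; apply: Veq.
- twnorm; finF.
- twnorm; by field.
Qed.

Lemma R_KKt a b c d p : bracket (Kmap w a b) (Ktmap t w c d) p = w a b *: (Smap t w c d p - Smap t w d c p).
Proof.
rewrite (bracketE (LD_K a b) (LD_Kt c d)) /DK /DU /DS /DUt /DKt /Z3 /Kmap /Umap /Smap /Utmap /Ktmap /mkV /=.
rewrite ?pair0; pairs; apply: Veq.
- rewrite /= (tP12 c d p.1); twnorm; finF.
- rewrite /=; twnorm; rewrite (wA d c); by field.
Qed.

Lemma R_UtUt a b p : bracket (Utmap t w a) (Utmap t w b) p = Ktmap t w a b p.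
Proof.
rewrite (bracketE (LD_Ut a) (LD_Ut b)) /DK /DU /DS /DUt /DKt /Z3 /Kmap /Umap /Smap /Utmap /Ktmap /mkV /=.
rewrite ?pair0; pairs; apply: Veq.
- have f1 := A2 (t p.1 b p.1) p.1 a; rewrite -(I2 p.1 b) in f1.
  have f2 := A2 (t p.1 a p.1) p.1 b; rewrite -(I2 p.1 a) in f2.
  have f5 := congr1 (fun u => t p.1 u p.1) (A2 a b p.1); simpl in f5; twnormin f5.
  apply: (lcF9 (c1 := -1/12) (c2 := 1/12) (c3 := 1/6) (c4 := -1/6) (c5 := -1/6)
    (c6 := -p.2/4) (c7 := -p.2/4) (c8 := p.2/4) (c9 := -p.2/4) f1 f2
    (A1 p.1 a p.1 b p.1) (A1 p.1 b p.1 a p.1) f5 (A3 a b p.1) (A3 a p.1 b) (A3 b p.1 a) (A2 a b p.1))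
    => phi Hphi; twnorm; pushphi Hphi; by field.
- twnorm; set z := p.1.
  rewrite (G4 (t z b z) z a) (G6 (t z b z) z a) (G5 (t z b z) z a).
  rewrite (G4 (t z a z) z b) (G6 (t z a z) z b) (G5 (t z a z) z b).
  rewrite (G4 b z a) (G4 a z b) (G5 b z a) (G5 a z b) (wA a (t z b z)) (wA b (t z a z)).
  rewrite (G6 a z b) (wA (t z b z) (t z a z)) -(I2 z b) -(I2 z a) (wA z a) (wA z b) (wA b a).
  apply: (lck1 (c1 := -1/12) (Q4 z a b)); by field.
Qed.

Lemma R_KtKt a b c d p : bracket (Ktmap t w a b) (Ktmap t w c d) p = 0.
Proof.
rewrite (bracketE (LD_Kt a b) (LD_Kt c d)) /DK /DU /DS /DUt /DKt /Z3 /Kmap /Umap /Smap /Utmap /Ktmap /mkV /=.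
rewrite ?pair0; pairs; apply: Veq.
- twnorm; finF.
- twnorm; by field.
Qed.

Lemma R_KtUt a b c p : bracket (Ktmap t w a b) (Utmap t w c) p = 0.
Proof.
rewrite (bracketE (LD_Kt a b) (LD_Ut c)) /DK /DU /DS /DUt /DKt /Z3 /Kmap /Umap /Smap /Utmap /Ktmap /mkV /=.
rewrite ?pair0; pairs; apply: Veq.
- twnorm; set z := p.1.
  rewrite (tP13 (t z c z) z z) (tP12' (t z c z) z z) (tP13 c z z) (tP12' c z z).
  rewrite (tP13' (t z z z) c z); twnorm.
  rewrite T5 I5 -(I2 z c); twnorm; finF.
- twnorm; set z := p.1.
  rewrite (G1 (t z c z) z) (G1 c z) -(I2 z (t z c z)) -(I2 z c) (G3 (t z c z) z) (G3 c z).
  rewrite (G4 (t z z z) z c) (G6 (t z z z) z c) (G5 (t z z z) z c).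
  rewrite (wA (t z c z) (t z z z)) J (wA c (t z z z)) (wA z c); by field.
Qed.

Lemma R_KK a b c d p : bracket (Kmap w a b) (Kmap w c d) p = 0.
Proof. by rewrite (bracketE (LD_K a b) (LD_K c d)) /DK subrr. Qed.
Lemma R_KU a b c p : bracket (Kmap w a b) (Umap w c) p = 0.
Proof.
rewrite (bracketE (LD_K a b) (LD_U c)) /DK /DU /Kmap /mkV /=.
rewrite ?pair0; pairs; apply: Veq; twnorm; [finF | by field].
Qed.

Lemma inspan_ext f g : inspan t w f -> (forall p, f p = g p) -> inspan t w g.
Proof. by move=> H E; have <- : f = g by apply: functional_extensionality. Qed.
Lemma inspan_scale (a : k) f : inspan t w f -> inspan t w (fun p => a *: f p).
Proof.
move=> H; apply: (inspan_ext (spanLC a H (span0 t w))) => p.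
by rewrite addr0.
Qed.
Lemma inspan_add f g : inspan t w f -> inspan t w g -> inspan t w (fun p => f p + g p).
Proof. by move=> H1 H2; apply: (inspan_ext (spanLC 1 H1 H2)) => p; rewrite scale1r. Qed.
Lemma inspan_sub f g : inspan t w f -> inspan t w g -> inspan t w (fun p => f p - g p).
Proof.
move=> H1 H2; apply: (inspan_ext (spanLC (-1) H2 H1)) => p.
by rewrite scaleN1r addrC.
Qed.
Lemma inspan_0 : inspan t w (fun _ => 0). Proof. exact: span0. Qed.
Lemma inK a b : inspan t w (Kmap w a b). Proof. by apply: spanG; left; exists a, b. Qed.
Lemma inU a : inspan t w (Umap w a). Proof. by apply: spanG; right; left; exists a. Qed.
Lemma inS a b : inspan t w (Smap t w a b).
Proof. by apply: spanG; right; right; left; exists a, b. Qed.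
Lemma inUt a : inspan t w (Utmap t w a).
Proof. by apply: spanG; right; right; right; left; exists a. Qed.
Lemma inKt a b : inspan t w (Ktmap t w a b).
Proof. by apply: spanG; right; right; right; right; exists a, b. Qed.

Lemma span_rel f g h : (forall p, bracket f g p = h p) -> inspan t w h -> inspan t w (bracket f g).
Proof. by move=> E H; apply: (inspan_ext H) => p; rewrite E. Qed.
Lemma span_rel_rev f g h : (forall p, bracket g f p = h p) -> inspan t w h ->
  inspan t w (bracket f g).
Proof.
move=> E H; apply: (inspan_ext (inspan_sub inspan_0 H)) => p.
by rewrite /= -E /bracket sub0r opprB.
Qed.

Ltac spanauto := repeat first [ exact: inK | exact: inU | exact: inS | exact: inUt | exact: inKt
  | exact: inspan_0 | apply: inspan_scale | apply: inspan_sub | apply: inspan_add ].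

Lemma gen_br f g : generator t w f -> generator t w g -> inspan t w (bracket f g).
Proof.
case=> [[a [b ->]]|[[a ->]|[[a [b ->]]|[[a ->]|[a [b ->]]]]]];
case=> [[c [d ->]]|[[c ->]|[[c [d ->]]|[[c ->]|[c [d ->]]]]]].
- apply: span_rel; [move=> ?; exact: (R_KK a b c d) | spanauto].
- apply: span_rel; [move=> ?; exact: (R_KU a b c) | spanauto].
- apply: span_rel_rev; [move=> ?; exact: (R_SK c d a b) | spanauto].
- apply: span_rel; [move=> ?; exact: (R_KUt a b c) | spanauto].
- apply: span_rel; [move=> ?; exact: (R_KKt a b c d) | spanauto].
- apply: span_rel_rev; [move=> ?; exact: (R_KU c d a) | spanauto].
- apply: span_rel; [move=> ?; exact: (R_UU a c) | spanauto].
- apply: span_rel_rev; [move=> ?; exact: (R_SU c d a) | spanauto].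
- apply: span_rel; [move=> ?; exact: (R_UUt a c) | spanauto].
- apply: span_rel; [move=> ?; exact: (R_UKt a c d) | spanauto].
- apply: span_rel; [move=> ?; exact: (R_SK a b c d) | spanauto].
- apply: span_rel; [move=> ?; exact: (R_SU a b c) | spanauto].
- apply: span_rel; [move=> ?; exact: (R_SS a b c d) | spanauto].
- apply: span_rel; [move=> ?; exact: (R_SUt a b c) | spanauto].
- apply: span_rel; [move=> ?; exact: (R_SKt a b c d) | spanauto].
- apply: span_rel_rev; [move=> ?; exact: (R_KUt c d a) | spanauto].
- apply: span_rel_rev; [move=> ?; exact: (R_UUt c a) | spanauto].
- apply: span_rel_rev; [move=> ?; exact: (R_SUt c d a) | spanauto].
- apply: span_rel; [move=> ?; exact: (R_UtUt a c) | spanauto].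
- apply: span_rel_rev; [move=> ?; exact: (R_KtUt c d a) | spanauto].
- apply: span_rel_rev; [move=> ?; exact: (R_KKt c d a b) | spanauto].
- apply: span_rel_rev; [move=> ?; exact: (R_UKt c a b) | spanauto].
- apply: span_rel_rev; [move=> ?; exact: (R_SKt c d a b) | spanauto].
- apply: span_rel; [move=> ?; exact: (R_KtUt a b c) | spanauto].
- apply: span_rel; [move=> ?; exact: (R_KtKt a b c d) | spanauto].
Qed.

Lemma br0l (g : V -> V) (p : V) : Good g -> bracket (fun _ => 0) g p = 0.
Proof.
move=> [Dg [_ [G1 [G2 _]]]].
have L0 : forall p v, LD (fun _ : V => 0) p v 0 by move=> *; exact: LD_cst.
rewrite (bracketE L0 G1) (lin0 (G2 p)).
by rewrite subrr.
Qed.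
Lemma br0r (g : V -> V) (p : V) : Good g -> bracket g (fun _ => 0) p = 0.
Proof.
move=> [Dg [_ [G1 [G2 _]]]].
have L0 : forall p v, LD (fun _ : V => 0) p v 0 by move=> *; exact: LD_cst.
rewrite (bracketE G1 L0) (lin0 (G2 p)).
by rewrite subrr.
Qed.

Lemma span_br f g : inspan t w f -> inspan t w g -> inspan t w (bracket f g).
Proof.
move=> Hf; elim: Hf g => [|f0 Hf0|a f1 f2 Hf1 IH1 Hf2 IH2] g Hg.
- by apply: (inspan_ext inspan_0) => p; rewrite br0l //; exact: Good_span.
- elim: Hg => [|g0 Hg0|a g1 g2 Hg1 IH1 Hg2 IH2].
  + by apply: (inspan_ext inspan_0) => p; rewrite br0r //; exact: Good_gen.
  + exact: gen_br.
  + apply: (inspan_ext (spanLC a IH1 IH2)) => p.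
    by rewrite br_lin2 //; [exact: Good_span|exact: Good_span|exact: Good_gen].
- apply: (inspan_ext (spanLC a (IH1 g Hg) (IH2 g Hg))) => p.
  by rewrite br_lin1 //; exact: Good_span.
Qed.

Lemma main_sec :
  ((forall f g, inspan t w f -> inspan t w g -> inspan t w (bracket f g)) /\
   (forall (a : k) f g h, inspan t w f -> inspan t w g -> inspan t w h ->
      forall p, bracket (fun q => a *: f q + g q) h p
                = a *: bracket f h p + bracket g h p) /\
   (forall (a : k) f g h, inspan t w f -> inspan t w g -> inspan t w h ->
      forall p, bracket h (fun q => a *: f q + g q) p
                = a *: bracket h f p + bracket h g p) /\
   (forall f, inspan t w f -> forall p, bracket f f p = 0) /\
   (forall f g h, inspan t w f -> inspan t w g -> inspan t w h ->
      forall p, bracket f (bracket g h) p + bracket g (bracket h f) p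
                + bracket h (bracket f g) p = 0)) /\
  (forall a b c d p, bracket (Smap t w a b) (Smap t w c d) p
       = Smap t w (t a b c) d p + Smap t w c (t b a d) p) /\
  (forall a b c p, bracket (Smap t w a b) (Umap w c) p = Umap w (t a b c) p) /\
  (forall a b c d p, bracket (Smap t w a b) (Kmap w c d) p
       = w c d *: Kmap w b a p) /\
  (forall a b p, bracket (Umap w a) (Umap w b) p = Kmap w a b p) /\
  (forall a b c p, bracket (Smap t w a b) (Utmap t w c) p = Utmap t w (t b a c) p) /\
  (forall a b c d p, bracket (Smap t w a b) (Ktmap t w c d) p
       = w c d *: Ktmap t w a b p) /\
  (forall a b p, bracket (Umap w a) (Utmap t w b) p = Smap t w a b p) /\
  (forall a c d p, bracket (Umap w a) (Ktmap t w c d) p = w c d *: Utmap t w a p) /\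
  (forall a b c p, bracket (Kmap w a b) (Utmap t w c) p = w a b *: Umap w c p) /\
  (forall a b c d p, bracket (Kmap w a b) (Ktmap t w c d) p
       = w a b *: (Smap t w c d p - Smap t w d c p)) /\
  (forall a b p, bracket (Utmap t w a) (Utmap t w b) p = Ktmap t w a b p) /\
  (forall a b c d p, bracket (Ktmap t w a b) (Ktmap t w c d) p = 0) /\
  (forall a b c p, bracket (Ktmap t w a b) (Utmap t w c) p = 0).
Proof.
split.
  split; first exact: span_br.
  split; first by move=> a f g h Hf Hg Hh p; apply: br_lin1; exact: Good_span.
  split; first by move=> a f g h Hf Hg Hh p; apply: br_lin2; exact: Good_span.
  split; first by move=> f _ p; rewrite /bracket subrr.
  by move=> f g h Hf Hg Hh p; apply: jacobi; exact: Good_span.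
split; first exact: R_SS.
split; first exact: R_SU.
split; first exact: R_SK.
split; first exact: R_UU.
split; first exact: R_SUt.
split; first exact: R_SKt.
split; first exact: R_UUt.
split; first exact: R_UKt.
split; first exact: R_KUt.
split; first exact: R_KKt.
split; first exact: R_UtUt.
split; first exact: R_KtKt.
exact: R_KtUt.
Qed.

End FTS.

Unset Implicit Arguments.

Theorem mainTheorem10 (k : numFieldType) (F : vectType k)
    (t : F -> F -> F -> F) (w : F -> F -> k) :
  is_FTS t w ->
  ((forall f g, inspan t w f -> inspan t w g -> inspan t w (bracket f g)) /\
   (forall (a : k) f g h, inspan t w f -> inspan t w g -> inspan t w h ->
      forall p, bracket (fun q => a *: f q + g q) h p
                = a *: bracket f h p + bracket g h p) /\
   (forall (a : k) f g h, inspan t w f -> inspan t w g -> inspan t w h ->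
      forall p, bracket h (fun q => a *: f q + g q) p
                = a *: bracket h f p + bracket h g p) /\
   (forall f, inspan t w f -> forall p, bracket f f p = 0) /\
   (forall f g h, inspan t w f -> inspan t w g -> inspan t w h ->
      forall p, bracket f (bracket g h) p + bracket g (bracket h f) p
                + bracket h (bracket f g) p = 0)) /\
  (forall a b c d p, bracket (Smap t w a b) (Smap t w c d) p
       = Smap t w (t a b c) d p + Smap t w c (t b a d) p) /\
  (forall a b c p, bracket (Smap t w a b) (Umap w c) p = Umap w (t a b c) p) /\
  (forall a b c d p, bracket (Smap t w a b) (Kmap w c d) p
       = w c d *: Kmap w b a p) /\
  (forall a b p, bracket (Umap w a) (Umap w b) p = Kmap w a b p) /\
  (forall a b c p, bracket (Smap t w a b) (Utmap t w c) p = Utmap t w (t b a c) p) /\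
  (forall a b c d p, bracket (Smap t w a b) (Ktmap t w c d) p
       = w c d *: Ktmap t w a b p) /\
  (forall a b p, bracket (Umap w a) (Utmap t w b) p = Smap t w a b p) /\
  (forall a c d p, bracket (Umap w a) (Ktmap t w c d) p = w c d *: Utmap t w a p) /\
  (forall a b c p, bracket (Kmap w a b) (Utmap t w c) p = w a b *: Umap w c p) /\
  (forall a b c d p, bracket (Kmap w a b) (Ktmap t w c d) p
       = w a b *: (Smap t w c d p - Smap t w d c p)) /\
  (forall a b p, bracket (Utmap t w a) (Utmap t w b) p = Ktmap t w a b p) /\
  (forall a b c d p, bracket (Ktmap t w a b) (Ktmap t w c d) p = 0) /\
  (forall a b c p, bracket (Ktmap t w a b) (Utmap t w c) p = 0).
Proof.
case=> h1 [h2 [h3 [h4 [h5 [h6 [h7 [h8 [h9 h10]]]]]]]].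
by apply: main_sec.
Qed.
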